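(* Let $G=(V,E,\mathcal F)$ be a map on a closed orientable surface with a reference orientation, and let $a,b\in E$ be two edges. Then \[ (\eta_a)_b=\begin{cases}(\pi_b)_{h(a)}-(\pi_b)_{t(a)}+(\pi^*_b)_{r(a)}-(\pi^*_b)_{l(a)}+1, & \text{if } a=b,\\ (\pi_b)_{h(a)}-(\pi_b)_{t(a)}+(\pi^*_b)_{r(a)}-(\pi^*_b)_{l(a)}, & \text{otherwise.}\end{cases} \]
   Context: A map is a finite graph embedded in the surface so that every face is an open disc; each edge $e$ has tail $t(e)$, head $h(e)$, right shore $r(e)\in\mathcal F$ and left shore $l(e)\in\mathcal F$. For $v\in V$, $\delta v\in\mathbb R^E$ has entries $1$ on edges with head $v$, $-1$ on edges with tail $v$, $0$ otherwise; for $F\in\mathcal F$, $\partial F\in\mathbb R^E$ has entries $1$ on edges with $r(e)=F$, $-1$ on edges with $l(e)=F$, $0$ otherwise. $\mathcal C$ is the space of smooth circulations: vectors $\phi\in\mathbb R^E$ with $\phi\cdot\delta v=0$ for all $v$ and $\phi\cdot\partial F=0$ for all $F$. For $e\in E$, $\chi_e$ is the unit vector of $e$ and $\eta_e$ is the orthogonal projection of $\chi_e$ onto $\mathcal C$. Harmonic functions: for a connected graph $H$ with node set $W$ and nodes $a,b\in W$, $\pi_{a,b}\in\mathbb R^W$ is the unique vector with $\sum_{u}\pi_u=0$ and, for every node $v$, $\sum_{u:\,uv\in E(H)}\pi_u-d_v\pi_v$ equal to $1$ if $v=b$, $-1$ if $v=a$, and $0$ otherwise (neighbors counted with edge multiplicity,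 $d_v$ the degree). For an edge $e$ of $G$, $\pi_e=\pi_{t(e),h(e)}$ computed in $G$. The dual map $G^*$ has node set $\mathcal F$ and edge set $E$, where edge $e$ joins $l(e)$ (its tail) to $r(e)$ (its head); $\pi^*_e=\pi_{l(e),r(e)}$ computed in $G^*$. *)

(* Defs.v *)
From HB Require Import structures.
From mathcomp Require Import all_boot all_order all_algebra all_fingroup.
From mathcomp Require Import reals.
Set Implicit Arguments. Unset Strict Implicit. Unset Printing Implicit Defensive.
Import Order.TTheory GRing.Theory Num.Theory.
Local Open Scope ring_scope.

(* A map on a closed orientable surface (with a reference orientation) is
   encoded by a rotation system (Heffter-Edmonds): each edge e : E has two
   darts (e,false) (the end at the tail t(e), pointing along e) and
   (e,true) (the end at the head h(e)); sigma is the rotation of darts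
   around vertices (counterclockwise w.r.t. the reference orientation of the
   surface), alpha the edge involution, phi = sigma \o alpha the face
   permutation. *)

Definition dart_alpha (E : finType) (d : E * bool) : E * bool := (d.1, ~~ d.2).

Definition dart_phi (E : finType) (sigma : {perm E * bool}) (d : E * bool) :
  E * bool := sigma (dart_alpha d).

Definition is_orientable_map (E V F : finType) (sigma : {perm E * bool})
    (vert : E * bool -> V) (face : E * bool -> F) : Prop :=
  [/\
      (forall d d', (vert d == vert d') = fconnect sigma d d'),
      (forall v : V, exists d, vert d = v),
      (forall d d', (face d == face d') = fconnect (dart_phi sigma) d d'),
      (forall f : F, exists d, face d = f) &
      (forall d d', connect [rel x y | (y == sigma x) || (y == dart_alpha x)] d d')].

Section MapData.
Variables (E V F : finType) (vert : E * bool -> V) (face : E * bool -> F).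
Definition tl (e : E) : V := vert (e, false).
Definition hd (e : E) : V := vert (e, true).
Definition rsh (e : E) : F := face (e, false).
Definition lsh (e : E) : F := face (e, true).
End MapData.

Section Vectors.
Variables (R : realType) (E V F : finType).
Variables (t h : E -> V) (r l : E -> F).

Definition deltaV (v : V) (e : E) : R :=
  (h e == v)%:R - (t e == v)%:R.
Definition partialF (f : F) (e : E) : R :=
  (r e == f)%:R - (l e == f)%:R.
Definition dotE (x y : E -> R) : R := \sum_(e : E) x e * y e.

Definition smooth (phi : E -> R) : Prop :=
  (forall v, dotE phi (deltaV v) = 0) /\ (forall f, dotE phi (partialF f) = 0).

Definition chi (a : E) (e : E) : R := (e == a)%:R.

Definition is_eta (a : E) (eta : E -> R) : Prop :=
  smooth eta /\ forall psi, smooth psi -> dotE (fun e => chi a e - eta e) psi = 0.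
End Vectors.

(* Graph with node set W, edge set E and endpoints src, dst : E -> W
   (edges with multiplicity; a loop contributes 2 to the degree). *)
Section Harmonic.
Variables (R : realType) (E W : finType) (src dst : E -> W).

Definition neigh_sum (p : W -> R) (v : W) : R :=
  \sum_(e : E) ((src e == v)%:R * p (dst e) + (dst e == v)%:R * p (src e)).
Definition degree (v : W) : R :=
  \sum_(e : E) ((src e == v)%:R + (dst e == v)%:R).

Definition is_harmonic_pi (a b : W) (p : W -> R) : Prop :=
  \sum_(u : W) p u = 0 /\
  forall v, neigh_sum p v - degree v * p v = (v == b)%:R - (v == a)%:R.
End Harmonic.

(* Main.v *)
Require Import Defs.
From HB Require Import structures.
From mathcomp Require Import all_boot all_order all_algebra all_fingroup.
From mathcomp Require Import reals.
From mathcomp Require Import ring.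
Import Order.TTheory GRing.Theory Num.Theory.
Local Open Scope ring_scope.

Section Aux.
Set Implicit Arguments. Unset Strict Implicit.
Variable R : realType.

Lemma eqmul_swap (W : eqType) (x v : W) (p : W -> R) :
  (x == v)%:R * p x = (x == v)%:R * p v.
Proof. by case: eqP => [->|]; rewrite ?mul0r. Qed.

Lemma grad_lap (E W : finType) (src dst : E -> W) (p : W -> R) (v : W) :
  \sum_e ((dst e == v)%:R - (src e == v)%:R) * (p (dst e) - p (src e)) =
  degree R src dst v * p v - neigh_sum src dst p v.
Proof.
rewrite /degree /neigh_sum mulr_suml -sumrB; apply: eq_bigr => e _.
have H1 := @eqmul_swap W (dst e) v p; have H2 := @eqmul_swap W (src e) v p.
transitivity ((dst e == v)%:R * p (dst e) - (dst e == v)%:R * p (src e)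
   - (src e == v)%:R * p (dst e) + (src e == v)%:R * p (src e)); first ring.
rewrite H1 H2; ring.
Qed.

Lemma sum_pick (W : finType) (p : W -> R) (x : W) :
  \sum_v p v * (x == v)%:R = p x.
Proof.
rewrite (bigD1 x) //= eqxx mulr1 big1 ?addr0 // => v hv.
by rewrite eq_sym (negbTE hv) mulr0.
Qed.

Lemma grad_expand (E W : finType) (src dst : E -> W) (p : W -> R) e :
  p (dst e) - p (src e) = \sum_v p v * ((dst e == v)%:R - (src e == v)%:R).
Proof.
by rewrite -(sum_pick p (dst e)) -(sum_pick p (src e)) -sumrB;
  apply: eq_bigr => v _; rewrite mulrBr.
Qed.

Variables (E V F : finType) (sigma : {perm E * bool}) (vert : E * bool -> V)
  (face : E * bool -> F).
Hypothesis Hmap : is_orientable_map sigma vert face.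

Lemma orth_vf v f :
  \sum_e deltaV R (tl vert) (hd vert) v e * partialF R (rsh face) (lsh face) f e = 0.
Proof.
case: Hmap => Hv _ Hf _ _.
pose T (d : E * bool) : R :=
  (vert d == v)%:R * ((face (dart_alpha d) == f)%:R - (face d == f)%:R).
have -> : \sum_e deltaV R (tl vert) (hd vert) v e * partialF R (rsh face) (lsh face) f e
   = \sum_e \sum_(s : bool) T (e, s).
  apply: eq_bigr => e _; rewrite big_bool /T /deltaV /partialF /tl /hd /rsh /lsh /dart_alpha /=.
  ring.
rewrite pair_bigA /=.
have -> : \sum_p T (p.1, p.2) = \sum_p T p by apply: eq_bigr => -[].
rewrite /T.
have Ha : forall d, face (dart_alpha d) = face (sigma d).
  move=> d; apply/eqP; rewrite Hf.
  have -> : sigma d = dart_phi sigma (dart_alpha d).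
    by rewrite /dart_phi /dart_alpha /= negbK -surjective_pairing.
  exact: fconnect1.
have Hs : forall d, vert (sigma d) = vert d.
  by move=> d; apply/esym/eqP; rewrite Hv; apply: fconnect1.
under eq_bigr do rewrite mulrBr Ha.
rewrite sumrB.
by rewrite [X in _ - X](reindex_inj (@perm_inj _ sigma)) /=; under [X in _ - X]eq_bigr do rewrite Hs; rewrite subrr.
Qed.

Lemma orth_pq (p : V -> R) (q : F -> R) :
  \sum_e (p (hd vert e) - p (tl vert e)) * (q (rsh face e) - q (lsh face e)) = 0.
Proof.
under eq_bigr do rewrite (grad_expand (tl vert) (hd vert) p) (grad_expand (lsh face) (rsh face) q).
under eq_bigr do rewrite mulr_suml.
rewrite exchange_big /=; apply: big1 => v _.
under eq_bigr do rewrite mulr_sumr.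
rewrite exchange_big /=; apply: big1 => f _.
transitivity (p v * q f * \sum_e deltaV R (tl vert) (hd vert) v e * partialF R (rsh face) (lsh face) f e).
  rewrite mulr_sumr; apply: eq_bigr => e _; rewrite /deltaV /partialF; ring.
by rewrite orth_vf mulr0.
Qed.

End Aux.


Section Aux2.
Set Implicit Arguments. Unset Strict Implicit.
Lemma sum_pick2 (R : realType) (W : finType) (p : W -> R) (x : W) :
  \sum_v (v == x)%:R * p v = p x.
Proof.
rewrite (bigD1 x) //= eqxx mul1r big1 ?addr0 // => v hv.
by rewrite (negbTE hv) mul0r.
Qed.

Lemma dot_grad0 (R : realType) (E W : finType) (src dst : E -> W) (x : E -> R)
  (p : W -> R) :
  (forall v, \sum_e x e * ((dst e == v)%:R - (src e == v)%:R) = 0) ->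
  \sum_e x e * (p (dst e) - p (src e)) = 0.
Proof.
move=> H.
under eq_bigr do rewrite (grad_expand src dst p) mulr_sumr.
rewrite exchange_big /=; apply: big1 => v _.
transitivity (p v * \sum_e x e * ((dst e == v)%:R - (src e == v)%:R)).
  by rewrite mulr_sumr; apply: eq_bigr => e _; rewrite mulrCA.
by rewrite H mulr0.
Qed.

Lemma grad_lap2 (R : realType) (E W : finType) (src dst : E -> W) (p : W -> R) (a b v : W) :
  is_harmonic_pi src dst a b p ->
  \sum_e (p (dst e) - p (src e)) * ((dst e == v)%:R - (src e == v)%:R) =
  (a == v)%:R - (b == v)%:R.
Proof.
case=> _ H.
under eq_bigr do rewrite mulrC.
rewrite grad_lap.
have := H v; rewrite (eq_sym v a) (eq_sym v b) => H'.
rewrite -opprB H'; ring.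
Qed.

Lemma split3 (R : realType) (E : finType) (g1 g2 g3 D : E -> R) :
  \sum_e (g1 e + g2 e + g3 e) * D e =
  \sum_e g1 e * D e + \sum_e g2 e * D e + \sum_e g3 e * D e.
Proof. by rewrite -!big_split; apply: eq_bigr => e _; rewrite !mulrDl. Qed.
Lemma split3l (R : realType) (E : finType) (g1 g2 g3 D : E -> R) :
  \sum_e D e * (g1 e + g2 e + g3 e) =
  \sum_e D e * g1 e + \sum_e D e * g2 e + \sum_e D e * g3 e.
Proof. by rewrite -!big_split; apply: eq_bigr => e _; rewrite !mulrDr. Qed.
End Aux2.

Theorem mainTheorem4 (R : realType) (E V F : finType)
  (sigma : {perm E * bool}) (vert : E * bool -> V) (face : E * bool -> F)
  (Hmap : is_orientable_map sigma vert face)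
  (a b : E) (eta : E -> R) (pib : V -> R) (pisb : F -> R) :
  is_eta (tl vert) (hd vert) (rsh face) (lsh face) a eta ->
  is_harmonic_pi (tl vert) (hd vert) (tl vert b) (hd vert b) pib ->
  is_harmonic_pi (lsh face) (rsh face) (lsh face b) (rsh face b) pisb ->
  eta b = pib (hd vert a) - pib (tl vert a)
          + pisb (rsh face a) - pisb (lsh face a) + (a == b)%:R.
Proof.
move=> [[Hev Hef] Heta] Hpi Hpis.
pose w e := chi R b e + (pib (hd vert e) - pib (tl vert e))
   + (pisb (rsh face e) - pisb (lsh face e)).
have Hw : smooth (tl vert) (hd vert) (rsh face) (lsh face) w.
  split=> [v|f]; rewrite /dotE /w /chi.
  - rewrite /deltaV.
    rewrite split3 /=.
    rewrite sum_pick2 (grad_lap2 v Hpi).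
    rewrite [X in _ + X = 0](_ : _ = 0); first ring.
    under eq_bigr do rewrite mulrC.
    exact: (orth_pq Hmap (fun x : V => (x == v)%:R : R) pisb).
  - rewrite /partialF.
    rewrite split3 /=.
    rewrite sum_pick2 (grad_lap2 f Hpis).
    rewrite [X in _ + X + _ = 0](_ : _ = 0); first ring.
    exact: (orth_pq Hmap pib (fun x : F => (x == f)%:R : R)).
have := Heta w Hw.
rewrite /dotE.
under eq_bigr do rewrite mulrBl.
rewrite sumrB /chi sum_pick2.
have -> : \sum_i eta i * w i = eta b.
  rewrite /w /chi.
  rewrite split3l /=.
  under eq_bigr do rewrite mulrC.
  have H1 : \sum_i eta i * (pib (hd vert i) - pib (tl vert i)) = 0.
    by apply: dot_grad0 => v; have := Hev v; rewrite /dotE /deltaV.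
  have H2 : \sum_i eta i * (pisb (rsh face i) - pisb (lsh face i)) = 0.
    by apply: dot_grad0 => f; have := Hef f; rewrite /dotE /partialF.
  by rewrite sum_pick2 H1 H2 !addr0.
move/eqP; rewrite subr_eq0 => /eqP <-.
rewrite /w /chi; ring.
Qed.
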